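(* Let $\Gamma$ be a group and $\alpha\in\mathrm{End}(\Gamma)$. Then $G(\alpha)\cong G(\varprojlim\alpha)$.
   Context: $\{0,1\}^*$ denotes the set of finite words over $\{0,1\}$ (including the empty word $\epsilon$), and $\mathfrak C=\{0,1\}^{\mathbb N}$ the Cantor space. A finite complete prefix code is a finite set $\{t_1,\dots,t_n\}\subset\{0,1\}^*$ such that every $x\in\mathfrak C$ has exactly one $t_i$ as a prefix. Thompson's group $V$ is the group of homeomorphisms $v$ of $\mathfrak C$ for which there exist finite complete prefix codes $\{t_1,\dots,t_n\}$, $\{s_1,\dots,s_n\}$ and a permutation $\sigma$ with $v(t_iw)=s_{\sigma(i)}w$ for all $i$, $w\in\mathfrak C$. For a group $\Lambda$ and group morphism $\omega:\Lambda\times\Lambda\to\Lambda$, $K(\omega)$ is the group of maps $a:\{0,1\}^*\to\Lambda$ (pointwise product) with $a(u)=\omega(a(u0),a(u1))$ for all $u$; $V$ acts on it by $\pi(v)(a)(s_{\sigma(i)}u)=a(t_iu)$ for all $i$, $u\in\{0,1\}^*$ (this determines $\pi(v)(a)\in K(\omega)$ uniquely), and $G(\omega):=K(\omega)\rtimes V$ with $vav^{-1}=\pi(v)(a)$. For $\beta\in\mathrm{End}(\Lambda)$, $G(\beta):=G(\omega)$ with $\omega(g,h)=\beta(g)$. $\varprojlim\Gamma:=\{(g_n)\in\prod_{\mathbb N}\Gamma: g_n=\alpha(g_{n+1})\ \forall n\}$, and $\varprojlim\alpha:\varprojlim\Gamma\to\varprojlim\Gamma$, $(g_n)\mapsto(\alpha(g_n))$,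 which is an automorphism of $\varprojlim\Gamma$. *)

(* Defs.v *)
From mathcomp Require Import all_boot.
From Stdlib Require Import ClassicalEpsilon.
Set Implicit Arguments. Unset Strict Implicit. Unset Printing Implicit Defensive.

Record is_group_law (T : Type) (mul : T -> T -> T) (one : T) (inv : T -> T) : Prop := {
  grp_assoc : forall x y z, mul x (mul y z) = mul (mul x y) z;
  grp_mul1l : forall x, mul one x = x;
  grp_mul1r : forall x, mul x one = x;
  grp_mulVl : forall x, mul (inv x) x = one;
  grp_mulVr : forall x, mul x (inv x) = one }.

Arguments is_group_law {T}.
Definition is_endo (T : Type) (mul : T -> T -> T) (f : T -> T) : Prop :=
  forall x y, f (mul x y) = mul (f x) (f y).

(* words over {0,1}: 0 = false, 1 = true *)
Definition word := seq bool.
Definition cantor := nat -> bool.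

Definition is_prefix (t : word) (x : cantor) : Prop :=
  forall i, i < size t -> x i = nth false t i.

Definition wcat (t : word) (w : cantor) : cantor :=
  fun i => if i < size t then nth false t i else w (i - size t).

Definition complete_prefix_code (n : nat) (t : 'I_n -> word) : Prop :=
  forall x : cantor, exists! i : 'I_n, is_prefix (t i) x.

Definition cantor_continuous (f : cantor -> cantor) : Prop :=
  forall (x : cantor) (N : nat), exists M : nat, forall y : cantor,
    (forall i, i < M -> y i = x i) -> forall i, i < N -> f y i = f x i.

Definition cantor_homeo (f : cantor -> cantor) : Prop :=
  exists g : cantor -> cantor,
    cancel f g /\ cancel g f /\ cantor_continuous f /\ cantor_continuous g.

Arguments complete_prefix_code : clear implicits.
Definition V_rep (v : cantor -> cantor) (n : nat) (t s : 'I_n -> word)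
    (sigma : 'I_n -> 'I_n) : Prop :=
  complete_prefix_code n t /\ complete_prefix_code n s /\ bijective sigma /\
  forall (i : 'I_n) (w : cantor), v (wcat (t i) w) = wcat (s (sigma i)) w.

Arguments V_rep : clear implicits.
(* Thompson's group V, as a set of maps Cantor -> Cantor (group law: composition) *)
Definition inV (v : cantor -> cantor) : Prop :=
  cantor_homeo v /\
  exists n (t s : 'I_n -> word) (sigma : 'I_n -> 'I_n), V_rep v n t s sigma.

Section GOmega.
Variables (L : Type) (inL : L -> Prop) (mulL : L -> L -> L) (omega : L -> L -> L).
(* L together with inL is the group Lambda (a subset of L closed under mulL),
   omega : Lambda x Lambda -> Lambda *)

Definition inK (a : word -> L) : Prop :=
  (forall u, inL (a u)) /\
  forall u : word, a u = omega (a (rcons u false)) (a (rcons u true)).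

(* pi(v)(a): the unique b in K(omega) with b(s_{sigma i} u) = a(t_i u) *)
Definition piV (v : cantor -> cantor) (a : word -> L) : word -> L :=
  epsilon (inhabits a) (fun b => inK b /\
    exists n (t s : 'I_n -> word) (sigma : 'I_n -> 'I_n),
      V_rep v n t s sigma /\
      forall (i : 'I_n) (u : word), b (s (sigma i) ++ u) = a (t i ++ u)).

(* raw elements of K(omega) x| V *)
Definition rawG := ((word -> L) * (cantor -> cantor))%type.

Definition inG (x : rawG) : Prop := inK x.1 /\ inV x.2.

(* (a, v) (b, w) = (a * pi(v)(b), v o w), i.e.  v b v^-1 = pi(v)(b) *)
Definition mulG (x y : rawG) : rawG :=
  (fun u => mulL (x.1 u) (piV x.2 y.1 u), x.2 \o y.2).
End GOmega.

Definition group_iso (A B : Type) (inA : A -> Prop) (mulA : A -> A -> A)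
    (inB : B -> Prop) (mulB : B -> B -> B) : Prop :=
  exists f : A -> B,
    (forall x, inA x -> inB (f x)) /\
    (forall x y, inA x -> inA y -> f x = f y -> x = y) /\
    (forall y, inB y -> exists2 x, inA x & f x = y) /\
    (forall x y, inA x -> inA y -> f (mulA x y) = mulB (f x) (f y)).

Definition omega_of (L : Type) (beta : L -> L) : L -> L -> L := fun g _ => beta g.

Definition in_lim (T : Type) (alpha : T -> T) (g : nat -> T) : Prop :=
  forall n, g n = alpha (g n.+1).
Definition lim_mul (T : Type) (mul : T -> T -> T) (g h : nat -> T) : nat -> T :=
  fun n => mul (g n) (h n).
Definition lim_map (T : Type) (alpha : T -> T) (g : nat -> T) : nat -> T :=
  fun n => alpha (g n).

(* Main.v *)
Require Import Defs.
From mathcomp Require Import all_boot zify.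
From Stdlib Require Import ClassicalEpsilon FunctionalExtensionality.
Set Implicit Arguments. Unset Strict Implicit.

Lemma wcat_cat (p q : word) (y : cantor) : wcat (p ++ q) y = wcat p (wcat q y).
Proof.
apply: functional_extensionality => i; rewrite /wcat size_cat nth_cat.
case: (ltnP i (size p)) => h.
  by rewrite (leq_trans h (leq_addr _ _)).
have -> : (i - size p < size q) = (i < size p + size q) by apply/idP/idP; lia.
by case: ifP => //; rewrite subnDA.
Qed.

Lemma wcat_inj (P Q : word) : (forall y, wcat P y = wcat Q y) -> P = Q.
Proof.
move=> H.
have Hn : forall m, m < size P -> m < size Q -> nth false P m = nth false Q m.
  move=> m h1 h2; have := congr1 (fun f => f m) (H (fun _ => false)).
  by rewrite /wcat h1 h2.
case: (ltngtP (size P) (size Q)) => hs.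
- have := congr1 (fun f => f (size P)) (H (fun _ => ~~ nth false Q (size P))).
  rewrite /wcat /= ltnn hs; by case: (nth false Q (size P)).
- have := congr1 (fun f => f (size Q)) (H (fun _ => ~~ nth false P (size Q))).
  rewrite /wcat /= ltnn hs; by case: (nth false P (size Q)).
- apply: (eq_from_nth (x0 := false) hs) => m hm; apply: Hn => //; by rewrite -hs.
Qed.

Lemma prefix_split (p W : word) : size p <= size W ->
  (forall m, m < size p -> nth false W m = nth false p m) -> W = p ++ drop (size p) W.
Proof.
move=> hs H; rewrite -{1}(cat_take_drop (size p) W); congr (_ ++ _).
apply: (eq_from_nth (x0 := false)); first by rewrite size_take_min; lia.
move=> m; rewrite size_take_min => hm; rewrite nth_take; last by lia.
apply: H; lia.
Qed.

Lemma wcat0_nth (w : word) k m : wcat w (fun _ => false) m = nth false (w ++ nseq k false) m.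
Proof.
by rewrite /wcat nth_cat; case: ifP => // _; rewrite nth_nseq; case: ifP.
Qed.

Lemma iterK L (inL : L -> Prop) beta a : inK inL (omega_of beta) a ->
  forall k u, a u = iter k beta (a (u ++ nseq k false)).
Proof.
move=> [_ Ha]; elim=> [|k IH] u; first by rewrite cats0.
rewrite iterS /= -cat_rcons -IH; have := Ha u; by rewrite /omega_of.
Qed.

Lemma code_split n (s : 'I_n -> word) (w : word) j k :
  is_prefix (s j) (wcat w (fun _ => false)) -> size (s j) <= k ->
  w ++ nseq k false = s j ++ drop (size (s j)) (w ++ nseq k false).
Proof.
move=> Hp hk; apply: prefix_split.
  by rewrite size_cat size_nseq; lia.
by move=> m hm; rewrite -(wcat0_nth w k m) Hp.
Qed.

Lemma spec_repr L (inL : L -> Prop) beta (a b : word -> L) v n t s sigma :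
  V_rep v n t s sigma -> inK inL (omega_of beta) b ->
  (forall i u, b (s (sigma i) ++ u) = a (t i ++ u)) ->
  forall w, exists k0, forall k, k0 <= k -> exists P,
    b w = iter k beta (a P) /\ forall y, v (wcat P y) = wcat (w ++ nseq k false) y.
Proof.
move=> [Ht [Hs [[g sg gs] Hv]]] Hb Hspec w.
have [j [Hj _]] := Hs (wcat w (fun _ => false)).
exists (size (s j)) => k hk.
have E := code_split Hj hk.
exists (t (g j) ++ drop (size (s j)) (w ++ nseq k false)); split.
  rewrite (iterK Hb k w); congr iter; rewrite {1}E.
  by have := Hspec (g j) (drop (size (s j)) (w ++ nseq k false)); rewrite gs.
move=> y; rewrite wcat_cat Hv gs -wcat_cat -E //.
Qed.

Lemma piV_uniq L (inL : L -> Prop) beta (a b b' : word -> L) v :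
  injective v -> inK inL (omega_of beta) b -> inK inL (omega_of beta) b' ->
  (exists n t s sigma, V_rep v n t s sigma /\ forall i u, b (s (sigma i) ++ u) = a (t i ++ u)) ->
  (exists n t s sigma, V_rep v n t s sigma /\ forall i u, b' (s (sigma i) ++ u) = a (t i ++ u)) ->
  b = b'.
Proof.
move=> vinj Hb Hb' [n [t [s [sg [Hr Hsp]]]]] [n' [t' [s' [sg' [Hr' Hsp']]]]].
apply: functional_extensionality => w.
have [k0 H0] := spec_repr Hr Hb Hsp w.
have [k1 H1] := spec_repr Hr' Hb' Hsp' w.
have [P [-> HP]] := H0 (maxn k0 k1) (leq_maxl _ _).
have [P' [-> HP']] := H1 (maxn k0 k1) (leq_maxr _ _).
suff -> : P = P' by [].
apply: wcat_inj => y; apply: vinj; by rewrite HP HP'.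
Qed.

Lemma iter_in L (inL : L -> Prop) beta : (forall x, inL x -> inL (beta x)) ->
  forall k x, inL x -> inL (iter k beta x).
Proof. by move=> H; elim=> // k IH x hx /=; apply: H; apply: IH. Qed.

Lemma piV_exists L (inL : L -> Prop) beta (a : word -> L) v n t s sigma :
  (forall x, inL x -> inL (beta x)) -> V_rep v n t s sigma -> inK inL (omega_of beta) a ->
  exists b, inK inL (omega_of beta) b /\ forall i u, b (s (sigma i) ++ u) = a (t i ++ u).
Proof.
move=> Hcl [Ht [Hs [[g sg gs] Hv]]] Ha.
have [j0 _] := Hs (fun _ => false).
pose J := fun w : word => epsilon (inhabits j0) (fun j => is_prefix (s j) (wcat w (fun _ => false))).
have HJ : forall w, is_prefix (s (J w)) (wcat w (fun _ => false)).
  move=> w; rewrite /J; apply: (epsilon_spec (inhabits j0) (fun j => is_prefix (s j) (wcat w (fun _ => false)))).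
  by have [j [Hj _]] := Hs (wcat w (fun _ => false)); exists j.
have HJu : forall w j, is_prefix (s j) (wcat w (fun _ => false)) -> J w = j.
  move=> w j Hj; have [j' [_ Hu]] := Hs (wcat w (fun _ => false)).
  by rewrite -(Hu _ (HJ w)) (Hu _ Hj).
pose b := fun w : word => let k := size (s (J w)) in
  iter k beta (a (t (g (J w)) ++ drop k (w ++ nseq k false))).
exists b; split; [split|].
- by move=> u; rewrite /b; apply: iter_in => //; apply: Ha.1.
- move=> u; rewrite /omega_of /b.
  have -> : J (rcons u false) = J u.
    apply: HJu; have -> : wcat (rcons u false) (fun _ => false) = wcat u (fun _ => false).
      rewrite -cats1 wcat_cat; congr wcat; apply: functional_extensionality => i; rewrite /wcat /=; by case: i.
    exact: HJ.
  set k := size (s (J u)).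
  have hk : k <= size (u ++ nseq k false) by rewrite size_cat size_nseq; lia.
  have E : rcons u false ++ nseq k false = rcons (u ++ nseq k false) false.
    rewrite cat_rcons rcons_cat; congr (_ ++ _); by elim: (k) => //= m ->.
  rewrite E.
  rewrite drop_rcons // -rcons_cat -iterS iterSr.
  by have := (Ha.2 (t (g (J u)) ++ drop k (u ++ nseq k false))); rewrite /omega_of => <-.
- move=> i u; rewrite /b.
  have -> : J (s (sigma i) ++ u) = sigma i.
    apply: HJu => m hm; rewrite /wcat size_cat nth_cat hm.
    by rewrite (leq_trans hm (leq_addr _ _)).
  by rewrite sg -catA drop_size_cat // catA -(iterK Ha).
Qed.

Lemma piV_spec L (inL : L -> Prop) beta v (a : word -> L) :
  (forall x, inL x -> inL (beta x)) -> inV v -> inK inL (omega_of beta) a ->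
  inK inL (omega_of beta) (piV inL (omega_of beta) v a) /\
  exists n t s sigma, V_rep v n t s sigma /\
    forall i u, piV inL (omega_of beta) v a (s (sigma i) ++ u) = a (t i ++ u).
Proof.
move=> Hcl [_ [n [t [s [sg Hr]]]]] Ha; rewrite /piV.
apply: (epsilon_spec (inhabits a) (fun b => inK inL (omega_of beta) b /\
    exists n t s sigma, V_rep v n t s sigma /\
      forall i u, b (s (sigma i) ++ u) = a (t i ++ u))).
have [b [Hb Hsp]] := piV_exists Hcl Hr Ha.
by exists b; split => //; exists n, t, s, sg.
Qed.

Lemma piV_char L (inL : L -> Prop) beta v (a c : word -> L) :
  (forall x, inL x -> inL (beta x)) -> inV v -> inK inL (omega_of beta) a ->
  inK inL (omega_of beta) c ->
  (exists n t s sigma, V_rep v n t s sigma /\ forall i u, c (s (sigma i) ++ u) = a (t i ++ u)) ->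
  piV inL (omega_of beta) v a = c.
Proof.
move=> Hcl Hv Ha Hc Hsc; have [H1 H2] := piV_spec Hcl Hv Ha.
have [[g [fg _]] _] := Hv.
exact: (piV_uniq (can_inj fg) H1 Hc H2 Hsc).
Qed.

Lemma nseqF k : false :: nseq k false = rcons (nseq k false) false.
Proof. by elim: k => //= k ->. Qed.

Definition Phi (T : Type) (a : word -> T) : word -> nat -> T :=
  fun u n => a (u ++ nseq n false).

Lemma Phi_inK T (alpha : T -> T) a : inK (fun _ => True) (omega_of alpha) a ->
  inK (in_lim alpha) (omega_of (lim_map alpha)) (Phi a).
Proof.
move=> [_ Ha]; split.
- move=> u n; rewrite /Phi; have := Ha (u ++ nseq n false); rewrite /omega_of => ->.
  by rewrite rcons_cat -nseqF.
- move=> u; rewrite /omega_of /lim_map /Phi; apply: functional_extensionality => n.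
  have := Ha (u ++ nseq n false); rewrite /omega_of => ->.
  by rewrite cat_rcons rcons_cat -nseqF.
Qed.

Lemma lim_cl T (alpha : T -> T) x : in_lim alpha x -> in_lim alpha (lim_map alpha x).
Proof. by move=> H n; rewrite /lim_map -H. Qed.

Lemma Phi_piV T (alpha : T -> T) v b : inV v -> inK (fun _ => True) (omega_of alpha) b ->
  Phi (piV (fun _ => True) (omega_of alpha) v b) =
  piV (in_lim alpha) (omega_of (lim_map alpha)) v (Phi b).
Proof.
move=> Hv Hb.
have [H1 [n [t [s [sg [Hr Hsp]]]]]] := piV_spec (fun x (_ : True) => I) Hv Hb.
symmetry; apply: piV_char => //.
- exact: lim_cl.
- exact: Phi_inK.
- exact: Phi_inK.
- exists n, t, s, sg; split => // i u; rewrite /Phi.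
  apply: functional_extensionality => m; by rewrite -catA Hsp catA.
Qed.

Theorem mainTheorem3 (T : Type) (mul : T -> T -> T) (one : T) (inv : T -> T)
  (HT : is_group_law mul one inv) (alpha : T -> T) (Halpha : is_endo mul alpha) :
  group_iso
    (inG (fun _ : T => True) (omega_of alpha))
    (mulG (fun _ : T => True) mul (omega_of alpha))
    (inG (in_lim alpha) (omega_of (lim_map alpha)))
    (mulG (in_lim alpha) (lim_mul mul) (omega_of (lim_map alpha))).
Proof.
exists (fun x : rawG T => (Phi x.1, x.2)); split; [|split; [|split]].
- by move=> [a v] [Ha Hv]; split => //; apply: Phi_inK.
- move=> [a v] [a' v'] _ _ [E ->]; congr pair.
  apply: functional_extensionality => u.
  by have := congr1 (fun f => f u 0) E; rewrite /Phi cats0.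
- move=> [b v] [[Hb1 Hb2] Hv]; simpl in Hb1, Hb2.
  exists ((fun u => b u 0), v); first split => //.
    split => // u /=; by rewrite {1}(Hb2 u).
  rewrite /=; congr pair; apply: functional_extensionality => u; apply: functional_extensionality => n.
  rewrite /Phi; elim: n u => [|n IH] u; first by rewrite cats0.
  rewrite -/(nseq n.+1 false) /= -cat_rcons IH.
  rewrite (Hb2 u) /omega_of /lim_map.
  by rewrite (Hb1 (rcons u false) n).
- move=> [a v] [b w] [Ha Hv] [Hb Hw]; rewrite /mulG /=; congr pair.
  by rewrite -Phi_piV.
Qed.
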